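(* Let the setting and notation be as in the context. Suppose the $L_1$-Consistency Assumption and the Concentration Assumption hold, and that $n^{1/2}\big(r_4(n)r_3(n,\theta^* )+r_5(n)r_1(n,\theta^* )\big)=o(1)$. Then $$n^{1/2}\hat S(\hat{\boldsymbol\beta}_{\theta^*})=n^{1/2}S(\boldsymbol\beta^* )+o_p(1),$$ where $S(\boldsymbol\beta)=\mathbf v^{*T}\mathbf t(\mathbf Z,\boldsymbol\beta)$ and $\hat{\boldsymbol\beta}_{\theta^*}=(\theta^*,\hat{\boldsymbol\gamma}^T)^T$.
   Context: Data: a random matrix $\mathbf Z\in\mathbb R^{n\times q}$; $\mathbb P^*$ denotes probability under the true parameter $\boldsymbol\beta^*\in\mathbb R^d$; $o_p(1)$ is with respect to $\mathbb P^*$ as $n\to\infty$ ($d$ may depend on $n$). Let $\mathbf t(\mathbf Z,\boldsymbol\beta):\mathbb R^{n\times q}\times\mathbb R^d\to\mathbb R^d$ be twice differentiable in $\boldsymbol\beta$, $E_{\mathbf t}(\boldsymbol\beta)=\lim_n\mathbb E\,\mathbf t(\mathbf Z,\boldsymbol\beta)$, $\boldsymbol\beta^*$ the unique root of $E_{\mathbf t}$. $\mathbf T(\mathbf Z,\boldsymbol\beta)=\partial\mathbf t/\partial\boldsymbol\beta$, $E_{\mathbf T}(\boldsymbol\beta)=\lim_n\mathbb E\,\mathbf T(\mathbf Z,\boldsymbol\beta)$, invertible at $\boldsymbol\beta^*$. Write $\boldsymbol\beta=(\theta,\boldsymbol\gamma^T)^T$ ($\theta$ first coordinate), $\boldsymbol\beta^*=(\theta^*,\boldsymbol\gamma^{*T})^T$,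 $\boldsymbol\beta_{\check\theta}=(\check\theta,\boldsymbol\gamma^T)^T$. $\mathbf v^{*T}$ = first row of $[E_{\mathbf T}(\boldsymbol\beta^* )]^{-1}$. $\hat{\boldsymbol\beta}=(\hat\theta,\hat{\boldsymbol\gamma}^T)^T=\arg\min\|\boldsymbol\beta\|_1$ s.t. $\|\mathbf t(\mathbf Z,\boldsymbol\beta)\|_\infty\le\lambda$; $\hat{\mathbf v}=\arg\min\|\mathbf v\|_1$ s.t. $\|\mathbf v^T\mathbf T(\mathbf Z,\hat{\boldsymbol\beta})-\mathbf e_1\|_\infty\le\lambda'$, $\mathbf e_1=(1,0,\dots,0)$; $\hat S(\boldsymbol\beta)=\hat{\mathbf v}^T\mathbf t(\mathbf Z,\boldsymbol\beta)$. $[\mathbf A]_{-1}$ is $\mathbf A$ without its first column. Concentration Assumption: there is a neighborhood $\mathcal N_{\theta^*}$ of $\theta^*$ and functions $r_1,r_2,r_3$ with $\sup_{\theta\in\mathcal N_{\theta^*}}\max_i r_i(n,\theta)=o(1)$ such that for all $\theta\in\mathcal N_{\theta^*}$: $\lim_n\mathbb P^*(\|\mathbf t(\mathbf Z,\boldsymbol\beta^*_\theta)-E_{\mathbf t}(\boldsymbol\beta^*_\theta)\|_\infty\le r_1(n,\theta))=1$; $\lim_n\mathbb P^*(|\mathbf v^{*T}\mathbf t(\mathbf Z,\boldsymbol\beta^*_\theta)-\mathbf v^{*T}E_{\mathbf t}(\boldsymbol\beta^*_\theta)|\le r_2(n,\theta))=1$; $\lim_n\mathbb P^*(\sup_{\nu\in[0,1]}\|\hat{\mathbf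 v}^T\mathbf T(\mathbf Z,\tilde{\boldsymbol\beta}_\nu)-\mathbf v^{*T}E_{\mathbf T}(\boldsymbol\beta^*_\theta)\|_\infty\le r_3(n,\theta))=1$ with $\tilde{\boldsymbol\beta}_\nu=\nu\hat{\boldsymbol\beta}_\theta+(1-\nu)\boldsymbol\beta^*_\theta$; and $\sup_{\theta\in\mathcal N_{\theta^*}}\|E_{\mathbf t}(\boldsymbol\beta^*_\theta)\|_\infty<\infty$, $\sup_{\theta\in\mathcal N_{\theta^*}}\|\mathbf v^{*T}[E_{\mathbf T}(\boldsymbol\beta^*_\theta)]_{-1}\|_\infty<\infty$. $L_1$-Consistency Assumption: $\lim_n\mathbb P^*(\|\hat{\boldsymbol\beta}-\boldsymbol\beta^*\|_1\le r_4(n))=1$, $\lim_n\mathbb P^*(\|\hat{\mathbf v}-\mathbf v^*\|_1\le r_5(n))=1$, $\max(r_4(n),r_5(n))=o(1)$. *)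

(* Defs.v *)
From HB Require Import structures.
From mathcomp Require Import all_boot all_order all_algebra.
From mathcomp Require Import all_classical all_reals all_analysis.
Set Implicit Arguments. Unset Strict Implicit. Unset Printing Implicit Defensive.
Import Order.TTheory GRing.Theory Num.Theory.
Import numFieldNormedType.Exports.
Local Open Scope classical_set_scope.
Local Open Scope ring_scope.

Definition mxinf (R : realType) m n (A : 'M[R]_(m, n)) : R :=
  \big[Num.max/0]_(ij : 'I_m * 'I_n) `|A ij.1 ij.2|.

Definition vnorm1 (R : realType) n (x : 'cV[R]_n) : R := \sum_i `|x i 0|.

Definition dotv (R : realType) n (v x : 'cV[R]_n) : R := (v^T *m x) 0 0.

(* replace the first coordinate theta of beta = (theta, gamma^T)^T *)
Definition setfirst (R : realType) d (th : R) (b : 'cV[R]_d.+1) : 'cV[R]_d.+1 :=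
  \col_i (if i == ord0 then th else b i 0).

Definition dropfirst (R : realType) m d (A : 'M[R]_(m, d.+1)) : 'M[R]_(m, d) :=
  \matrix_(i, j) A i (lift ord0 j).

Definition jacT (R : realType) D (f : 'cV[R]_D -> 'cV[R]_D) (b : 'cV[R]_D)
  : 'M[R]_D :=
  \matrix_(i, j) ('D_(delta_mx j 0) (fun x => f x i 0) b).

Definition e1 (R : realType) d : 'rV[R]_d.+1 := delta_mx 0 ord0.

(* lim_n P(A_n) = 1, stated with inner probability (measurable subsets) so
   that it is meaningful without measurability assumptions; for measurable
   A_n it is exactly lim_n P(A_n) = 1. *)
Definition wp1 (dd : measure_display) (Om : measurableType dd) (R : realType)
  (P : probability Om R) (A : nat -> set Om) : Prop :=
  exists B : nat -> set Om, (forall n, measurable (B n)) /\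
    (forall n, B n `<=` A n) /\ (P (B n) @[n --> \oo] --> 1%E).

(* X_n = o_p(1): for every eps > 0, P(|X_n| > eps) -> 0, stated with outer
   probability (measurable supersets). *)
Definition op1 (dd : measure_display) (Om : measurableType dd) (R : realType)
  (P : probability Om R) (X : nat -> Om -> R) : Prop :=
  forall eps : R, 0 < eps ->
  exists B : nat -> set Om, (forall n, measurable (B n)) /\
    (forall n, [set w | eps < `|X n w|] `<=` B n) /\ (P (B n) @[n --> \oo] --> 0%E).

(* Main.v *)
Require Import Defs.
From HB Require Import structures.
From mathcomp Require Import all_boot all_order all_algebra.
From mathcomp Require Import all_classical all_reals all_analysis.
From mathcomp Require Import ring lra.
Import Order.TTheory GRing.Theory Num.Theory.
Import numFieldNormedType.Exports.
Local Open Scope classical_set_scope.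
Local Open Scope ring_scope.
Lemma mxinf_ge (R : realType) m n (A : 'M[R]_(m, n)) i j : `|A i j| <= mxinf A.
Proof. exact: (le_bigmax 0 (fun ij : 'I_m * 'I_n => `|A ij.1 ij.2|) (i, j)). Qed.

Lemma mxinf_ge0 (R : realType) m n (A : 'M[R]_(m, n)) : 0 <= mxinf A.
Proof.
rewrite /mxinf; elim/big_ind: _ => //= x y hx hy.
by rewrite le_max hx.
Qed.

Lemma vnorm1_ge0 (R : realType) n (x : 'cV[R]_n) : 0 <= vnorm1 x.
Proof. by rewrite /vnorm1 sumr_ge0. Qed.

Lemma rowcol_bound (R : realType) D (u : 'rV[R]_D) (h : 'cV[R]_D) :
  `|(u *m h) 0 0| <= mxinf u * vnorm1 h.
Proof.
rewrite mxE /vnorm1 mulr_sumr; apply: le_trans (ler_norm_sum _ _ _) _.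
by apply: ler_sum => j _; rewrite normrM ler_wpM2r // mxinf_ge.
Qed.

Lemma dotv_bound (R : realType) D (u y : 'cV[R]_D) :
  `|dotv u y| <= vnorm1 u * mxinf y.
Proof.
rewrite /dotv mxE /vnorm1 mulr_suml; apply: le_trans (ler_norm_sum _ _ _) _.
by apply: ler_sum => j _; rewrite mxE normrM ler_wpM2l // mxinf_ge.
Qed.
Lemma coord_diff (R : realType) D (f : 'cV[R]_D -> 'cV[R]_D) (b h : 'cV[R]_D) i :
  differentiable f b ->
  'D_h (fun y => f y i 0) b = \sum_j h j 0 * jacT f b i j.
Proof.
move=> df.
have dv : forall u, derivable f b u by move=> u; exact: diff_derivable.
have key : forall u, 'D_u (fun y => f y i 0) b = ('d f b u) i 0.
  move=> u; rewrite -deriveE // derive_mx //= mxE //.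
rewrite key; under eq_bigr => j _ do rewrite mxE key.
rewrite {1}(matrix_sum_delta h) linear_sum /= summxE.
apply: eq_bigr => j _; rewrite big_ord1 linearZ /= mxE; congr (_ * _).
Qed.


Lemma mvt_dot (R : realType) D (f : 'cV[R]_D -> 'cV[R]_D) (v x a : 'cV[R]_D) :
  (forall b, differentiable f b) ->
  exists c : R, 0 <= c <= 1 /\
    dotv v (f x) - dotv v (f a) =
    (v^T *m jacT f (c *: x + (1 - c) *: a) *m (x - a)) 0 0.
Proof.
move=> df.
set h := x - a.
pose F := \sum_i (v i 0 \*: (fun y => f y i 0)).
have FE : forall y, dotv v (f y) = F y.
  move=> y; rewrite /F fct_sumE /dotv mxE; apply: eq_bigr => i _.
  by rewrite mxE.
pose g := fun s : R => F (s *: h + a).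
pose dF := fun b => (v^T *m jacT f b *m h) 0 0.
have dFi : forall i b, derivable (fun y => f y i 0) b h.
  move=> i b; apply: diff_derivable.
  exact: (differentiable_comp (df b) (differentiable_coord (f b) i 0)).
have DF : forall b, derivable F b h /\ 'D_h F b = dF b.
  move=> b; split.
    apply: derivable_sum => i; exact: derivableZ.
  rewrite derive_sum; last by move=> i; exact: derivableZ.
  under eq_bigr => i _ do rewrite deriveZ // coord_diff // /GRing.scale /=.
  rewrite /dF mxE.
  under [RHS]eq_bigr => j _ do rewrite mxE mulr_suml.
  rewrite exchange_big /=; apply: eq_bigr => i _.
  rewrite /= mulr_sumr; apply: eq_bigr => j _.
  by rewrite !mxE; ring.
have gq : forall s : R, (fun k : R => k^-1 *: ((g \o shift s) (k *: 1) - g s)) =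
     (fun k : R => k^-1 *: ((F \o shift (s *: h + a)) (k *: h) - F (s *: h + a))).
  move=> s; rewrite funeqE => k /=; rewrite /g /shift /=.
  have -> : (k *: 1 : R) + s = k + s by rewrite /GRing.scale /= mulr1.
  by rewrite scalerDl addrA.
have gd : forall s : R, is_derive s (1 : R) g (dF (s *: h + a)).
  move=> s; have [h1 h2] := DF (s *: h + a).
  have dg : derivable g s 1 by rewrite /derivable gq.
  have -> : dF (s *: h + a) = 'D_1 g s by rewrite -h2 /derive gq.
  exact: derivableP.
have gc : {within `[0, 1], continuous g}.
  apply: continuous_subspaceT => s.
  have := gd s => -[] /derivable1_diffP dg _.
  exact: differentiable_continuous.
have [c c01 hc] := @MVT_segment R g (fun s => dF (s *: h + a)) 0 1 ler01
   (fun s _ => gd s) gc.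
exists c; split; first by move: c01; rewrite in_itv.
rewrite !FE; move: hc; rewrite /g subr0 mulr1 scale1r scale0r add0r.
rewrite /h subrK => ->; rewrite /dF; congr ((_ *m jacT f _ *m _) 0 0).
by rewrite scalerBr scalerBl scale1r addrAC addrA.
Qed.

Lemma e1_mul (R : realType) D (y : 'cV[R]_D.+1) : y 0 0 = 0 ->
  (@e1 R D *m y) 0 0 = 0.
Proof.
move=> y0; rewrite mxE big1 // => j _; rewrite /e1 mxE.
rewrite eqxx /=; case: eqP => [->|_]; by rewrite ?y0 ?mulr0 ?mul0r.
Qed.

Lemma det_bound (R : realType) D (f : 'cV[R]_D.+1 -> 'cV[R]_D.+1)
  (bs bh vs vh Etb : 'cV[R]_D.+1) (ETm : 'M[R]_D.+1) (th r1 r3 r4 r5 : R) :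
  (forall b, differentiable f b) ->
  bs 0 0 = th -> Etb = 0 -> vs^T *m ETm = @e1 R D ->
  mxinf (f bs - Etb) <= r1 ->
  (forall nu : R, 0 <= nu <= 1 ->
     mxinf (vh^T *m jacT f (nu *: setfirst th bh + (1 - nu) *: setfirst th bs)
            - vs^T *m ETm) <= r3) ->
  vnorm1 (bh - bs) <= r4 -> vnorm1 (vh - vs) <= r5 ->
  `|dotv vh (f (setfirst th bh)) - dotv vs (f bs)| <= r4 * r3 + r5 * r1.
Proof.
move=> df bs0 Et0 ve1 E1 E3 E4 E5.
have sb : setfirst th bs = bs.
  apply/matrixP => i j; rewrite mxE ord1.
  by case: (eqVneq i ord0) => [->|_] //.
set x := setfirst th bh.
have [c [/andP[c0 c1] hc]] := @mvt_dot _ _ f vh x bs df.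
set J := jacT f _ in hc.
set W := vh^T *m J - vs^T *m ETm.
have hW : mxinf W <= r3 by move: (E3 c); rewrite c0 c1 sb => /(_ isT).
have hx0 : (x - bs) 0 0 = 0 by rewrite !mxE eqxx bs0 subrr.
have hxn : vnorm1 (x - bs) <= vnorm1 (bh - bs).
  apply: ler_sum => i _; rewrite !mxE.
  by case: (eqVneq i ord0) => [->|_]; rewrite ?bs0 ?subrr ?normr0 ?normr_ge0.
have A1 : `|dotv vh (f x) - dotv vh (f bs)| <= r4 * r3.
  rewrite hc (_ : vh^T *m J = W + @e1 R D); last by rewrite -ve1 subrK.
  rewrite mulmxDl mxE e1_mul // addr0.
  have := @rowcol_bound _ _ W (x - bs).
  have := @mxinf_ge0 _ _ _ W; have := @vnorm1_ge0 _ _ (x - bs).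
  move=> h1 h2 h3; apply: (le_trans h3).
  have : vnorm1 (x - bs) <= r4 by apply: le_trans hxn E4.
  move: hW; nra.
have A2 : `|dotv vh (f bs) - dotv vs (f bs)| <= r5 * r1.
  have -> : dotv vh (f bs) - dotv vs (f bs) = dotv (vh - vs) (f bs).
    by rewrite /dotv linearB mulmxBl !mxE.
  apply: (le_trans (@dotv_bound _ _ _ _)).
  move: E1; rewrite Et0 subr0 => E1.
  have := @mxinf_ge0 _ _ _ (f bs); have := @vnorm1_ge0 _ _ (vh - vs).
  move: E5; nra.
have -> : dotv vh (f x) - dotv vs (f bs) =
  (dotv vh (f x) - dotv vh (f bs)) + (dotv vh (f bs) - dotv vs (f bs)).
  by rewrite addrA subrK.
apply: (le_trans (ler_normD _ _)); exact: lerD.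
Qed.

Lemma ev1 (R : realType) (u : nat -> \bar R) :
  u n @[n --> \oo] --> 1%E -> (1 - u n)%E @[n --> \oo] --> 0%E.
Proof.
move=> hu.
have := cvgeB (F := \oo) (a := 1%E) (b := 1%E) isT (cvg_cst _) hu.
by rewrite subee // => h; apply: h; exact: filter_class.
Qed.

Lemma op1_of (dd : measure_display) (Om : measurableType dd) (R : realType)
  (P : probability Om R) (X : nat -> Om -> R) (c : nat -> R)
  (B1 B3 B4 B5 : nat -> set Om) :
  (forall n, measurable (B1 n)) -> (forall n, measurable (B3 n)) ->
  (forall n, measurable (B4 n)) -> (forall n, measurable (B5 n)) ->
  P (B1 n) @[n --> \oo] --> 1%E -> P (B3 n) @[n --> \oo] --> 1%E ->
  P (B4 n) @[n --> \oo] --> 1%E -> P (B5 n) @[n --> \oo] --> 1%E ->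
  c @ \oo --> 0 ->
  (forall n w, B1 n w -> B3 n w -> B4 n w -> B5 n w -> `|X n w| <= c n) ->
  op1 P X.
Proof.
move=> m1 m3 m4 m5 p1 p3 p4 p5 hc good eps eps0.
pose I n := B1 n `&` B3 n `&` B4 n `&` B5 n.
have mI : forall n, measurable (I n).
  by move=> n; apply: measurableI; [apply: measurableI; [apply: measurableI|]|].
exists (fun n => ~` I n `|` (if c n < eps then set0 else setT)); split.
  move=> n; apply: measurableU; first exact: measurableC.
  by case: ifP.
split.
  move=> n w /= hw; case: ifPn => hcn; last by right.
  left => -[[[h1 h3] h4] h5].
  have := good n w h1 h3 h4 h5; move: hw hcn => /=; lra.
pose u n := ((1 - P (B1 n)) + (1 - P (B3 n)) + (1 - P (B4 n)) + (1 - P (B5 n)))%E.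
have hu : u n @[n --> \oo] --> 0%E.
  rewrite -(adde0 0%E) -[X in (X + _)%E](adde0 0%E) -[X in (X + _ + _)%E](adde0 0%E).
  apply: cvgeD => //; [apply: cvgeD => //; [apply: cvgeD|] |]. all: try exact: ev1.
  all: rewrite /adde_def /=; try done.
apply: (squeeze_cvge (f := cst 0%E) (h := u)) => //; last exact: cvg_cst.
apply: filterS (cvgr_lt _ hc _ eps0) => n hcn.
rewrite measure_ge0 /= hcn setU0 /I !setCI.
have mC : forall A : set Om, measurable A -> measurable (~` A).
  by move=> A; apply: measurableC.
rewrite /u -!probability_setC //.
have h1 := measureU2 P (measurableU _ _ (measurableU _ _ (mC _ (m1 n)) (mC _ (m3 n))) (mC _ (m4 n))) (mC _ (m5 n)).
have h2 := measureU2 P (measurableU _ _ (mC _ (m1 n)) (mC _ (m3 n))) (mC _ (m4 n)).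
have h3 := measureU2 P (mC _ (m1 n)) (mC _ (m3 n)).
apply: (le_trans h1); apply: leeD2r; apply: (le_trans h2); exact: leeD2r.
Qed.

Lemma setfirst_id (R : realType) D (bs : 'cV[R]_D.+1) th :
  bs 0 0 = th -> setfirst th bs = bs.
Proof.
move=> bs0; apply/matrixP => i j; rewrite mxE ord1.
by case: (eqVneq i ord0) => [->|_] //.
Qed.

Theorem lemma1
  (R : realType) (dd : measure_display) (Om : measurableType dd)
  (P : probability Om R)
  (q : nat) (d : nat -> nat)                       (* beta in R^{(d n).+1} *)
  (Z : forall n : nat, Om -> 'M[R]_(n, q))          (* data *)
  (t : forall n : nat, 'M[R]_(n, q) -> 'cV[R]_(d n).+1 -> 'cV[R]_(d n).+1)
  (Et : forall n : nat, 'cV[R]_(d n).+1 -> 'cV[R]_(d n).+1)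
  (ET : forall n : nat, 'cV[R]_(d n).+1 -> 'M[R]_((d n).+1))
  (bstar : forall n : nat, 'cV[R]_(d n).+1) (thstar : R)
  (vstar : forall n : nat, 'cV[R]_(d n).+1)
  (lam lam' : nat -> R)
  (bhat vhat : forall n : nat, Om -> 'cV[R]_(d n).+1)
  (N : set R) (r1 r2 r3 : nat -> R -> R) (r4 r5 : nat -> R) :
  (* t is twice differentiable in beta *)
  (forall n Zn b, differentiable (t n Zn) b) ->
  (forall n Zn (i j : 'I_(d n).+1) b,
     differentiable (fun x => jacT (t n Zn) x i j) b) ->
  (* beta* is the unique root of E_t, theta* its first coordinate *)
  (forall n, Et n (bstar n) = 0) ->
  (forall n b, Et n b = 0 -> b = bstar n) ->
  (forall n, bstar n ord0 0 = thstar) ->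
  (* E_T(beta* ) invertible, v*^T = first row of its inverse *)
  (forall n, ET n (bstar n) \in unitmx) ->
  (forall n, vstar n = (row ord0 (invmx (ET n (bstar n))))^T) ->
  (* the Dantzig-type estimators *)
  (forall n w, mxinf (t n (Z n w) (bhat n w)) <= lam n /\
     forall b, mxinf (t n (Z n w) b) <= lam n -> vnorm1 (bhat n w) <= vnorm1 b) ->
  (forall n w,
     mxinf ((vhat n w)^T *m jacT (t n (Z n w)) (bhat n w) - @e1 R (d n)) <= lam' n /\
     forall v, mxinf (v^T *m jacT (t n (Z n w)) (bhat n w) - @e1 R (d n)) <= lam' n ->
       vnorm1 (vhat n w) <= vnorm1 v) ->
  (* Concentration Assumption *)
  N \in nbhs thstar ->
  ((fun n => ereal_sup
      [set (Num.max (r1 n th) (Num.max (r2 n th) (r3 n th)))%:E | th in N])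
     @ \oo --> 0%E) ->
  (forall th, N th ->
     wp1 P (fun n => [set w | mxinf (t n (Z n w) (setfirst th (bstar n))
                                     - Et n (setfirst th (bstar n))) <= r1 n th])) ->
  (forall th, N th ->
     wp1 P (fun n => [set w | `|dotv (vstar n) (t n (Z n w) (setfirst th (bstar n)))
                             - dotv (vstar n) (Et n (setfirst th (bstar n)))|
                             <= r2 n th])) ->
  (forall th, N th ->
     wp1 P (fun n => [set w | forall nu : R, 0 <= nu <= 1 ->
        mxinf ((vhat n w)^T *m jacT (t n (Z n w))
                 (nu *: setfirst th (bhat n w) + (1 - nu) *: setfirst th (bstar n))
               - (vstar n)^T *m ET n (setfirst th (bstar n))) <= r3 n th])) ->
  (exists M : R, forall n th, N th ->
     mxinf (Et n (setfirst th (bstar n))) <= M) ->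
  (exists M : R, forall n th, N th ->
     mxinf (dropfirst ((vstar n)^T *m ET n (setfirst th (bstar n)))) <= M) ->
  (* L1-Consistency Assumption *)
  wp1 P (fun n => [set w | vnorm1 (bhat n w - bstar n) <= r4 n]) ->
  wp1 P (fun n => [set w | vnorm1 (vhat n w - vstar n) <= r5 n]) ->
  ((fun n => Num.max (r4 n) (r5 n)) @ \oo --> 0) ->
  (* rate condition *)
  ((fun n => Num.sqrt n%:R * (r4 n * r3 n thstar + r5 n * r1 n thstar)) @ \oo --> 0) ->
  (* conclusion: n^{1/2} S^(beta^_{theta*}) = n^{1/2} S(beta* ) + o_p(1) *)
  op1 P (fun n w =>
     Num.sqrt n%:R * dotv (vhat n w) (t n (Z n w) (setfirst thstar (bhat n w)))
     - Num.sqrt n%:R * dotv (vstar n) (t n (Z n w) (bstar n))).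

Proof.
move=> Hdiff _ HEt0 _ Hth Hunit Hvstar _ _ HN _ Hc1 _ Hc3 _ _ Hl4 Hl5 _ Hrate.
have Nth : N thstar by move: HN; rewrite inE => /nbhs_singleton.
case: (Hc1 _ Nth) => B1 [m1 [s1 p1]].
case: (Hc3 _ Nth) => B3 [m3 [s3 p3]].
case: Hl4 => B4 [m4 [s4 p4]].
case: Hl5 => B5 [m5 [s5 p5]].
apply: (@op1_of _ _ _ P _ _ B1 B3 B4 B5 m1 m3 m4 m5 p1 p3 p4 p5 Hrate).
move=> n w h1 h3 h4 h5.
have sb := @setfirst_id _ _ (bstar n) thstar (Hth n).
rewrite -mulrBr normrM ger0_norm ?sqrtr_ge0 //.
apply: ler_wpM2l; first exact: sqrtr_ge0.
apply: (@det_bound _ _ (t n (Z n w)) (bstar n) (bhat n w) (vstar n) (vhat n w)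
  (Et n (bstar n)) (ET n (bstar n)) thstar (r1 n thstar) (r3 n thstar) (r4 n) (r5 n)).
- exact: Hdiff.
- exact: Hth.
- exact: HEt0.
- by rewrite Hvstar trmxK -row_mul mulVmx // row1.
- by have := s1 n w h1; rewrite /= sb.
- by have := s3 n w h3; rewrite /= sb.
- exact: s4.
- exact: s5.
Qed.
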